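(* Under the standing setup, fix $i\in\{1,2\}$ and suppose $X^i$ is a Markov chain with respect to its own filtration $\mathbb F^{X^i}$ with generator $\Lambda^i(t)=[\lambda^i_{x^iy^i}(t)]_{x^i,y^i\in\mathcal X^i}$. Then $$Q^i_t\,\Lambda(t)\,C^{i,*}=\Lambda^i(t)$$ for Lebesgue-almost every $t\ge0$, in the sense that for every function $g$ on $\mathcal X^i$ and every $x^i\in\mathcal X^i$ with $\mathbb P(X^i_t=x^i)>0$, $(Q^i_t\Lambda(t)C^{i,*}g)(x^i)=\sum_{y^i\in\mathcal X^i}\lambda^i_{x^iy^i}(t)g(y^i)$. Equivalently (for $i=1$), for a.e. $t$ and such $x^1$, and all $y^1\neq x^1$, $$\sum_{x^2,y^2\in\mathcal X^2}\lambda^{x^1x^2}_{y^1y^2}(t)\,\mathbb P(X^2_t=x^2\mid X^1_t=x^1)=\lambda^1_{x^1y^1}(t).$$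
   Context: Standing setup: $(\Omega,\mathcal F,\mathbb P)$ is a probability space; $\mathcal X^n\subset\mathbb R$, $n=1,2$, are finite sets and $\mathcal X=\mathcal X^1\times\mathcal X^2$. $X=(X^1,X^2)$ is a càdlàg process with values in $\mathcal X$ which is a Markov chain in its natural filtration $\mathbb F^X$, with infinitesimal generator $\Lambda(t)=[\lambda^{x^1x^2}_{y^1y^2}(t)]$ (locally integrable, nonnegative off-diagonal, rows summing to $0$), acting on functions $f$ on $\mathcal X$ by $(\Lambda(t)f)(x)=\sum_{y}\lambda^x_y(t)f(y)$. For $i=1,2$ and $t\ge0$, the operator $Q^i_t$ maps functions $f$ on $\mathcal X$ to functions on $\mathcal X^i$ by $(Q^i_tf)(x^i)=\mathbb E_{\mathbb P}(f(X_t)\mid X^i_t=x^i)$. The extension operator $C^{i,*}$ maps a function $f^i$ on $\mathcal X^i$ to the function on $\mathcal X$ given by $(C^{i,*}f^i)(x^1,x^2)=f^i(x^i)$. *)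

(* Defs.v *)
From HB Require Import structures.
From mathcomp Require Import all_boot all_order all_algebra.
From mathcomp Require Import all_classical all_reals all_analysis.
Set Implicit Arguments. Unset Strict Implicit. Unset Printing Implicit Defensive.
Import Order.TTheory GRing.Theory Num.Theory.
Local Open Scope classical_set_scope.
Local Open Scope ring_scope.

Definition is_generator (R : realType) (S : finType) (L : R -> S -> S -> R) : Prop :=
  [/\ (forall t x y, 0 <= t -> x != y -> 0 <= L t x y),
      (forall t x, 0 <= t -> \sum_(y : S) L t x y = 0) &
      (forall x y (T : R), 0 <= T ->
         (@lebesgue_measure R).-integrable `[0, T] (fun u => (L u x y)%:E))].

Definition gen_app (R : realType) (S : finType) (L : R -> S -> S -> R) (t : R)
  (f : S -> R) : S -> R := fun x => \sum_(y : S) L t x y * f y.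

(* Paths are cadlag for the discrete topology of the finite state space. *)
Definition cadlag (R : realType) (Om : Type) (S : Type) (Y : R -> Om -> S) : Prop :=
  forall w t, 0 <= t ->
    (exists e : R, 0 < e /\ forall s, t <= s < t + e -> Y s w = Y t w) /\
    (0 < t -> exists (e : R) (x : S), 0 < e /\ forall s, t - e < s < t -> Y s w = x).

(* Y is a Markov chain in its natural filtration with generator L:
   there is a transition (evolution) family Pt solving the Kolmogorov forward
   integral equation  Pt(s,t) = I + int_s^t Pt(s,u) L(u) du  (0 <= s <= t),
   and the finite-dimensional distributions of Y are given by Pt
   (this is the Markov property w.r.t. the natural filtration F^Y). *)
Definition markov_gen (R : realType) (d : measure_display) (Om : measurableType d)
  (P : probability Om R) (S : finType) (Y : R -> Om -> S) (L : R -> S -> S -> R) : Prop :=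
  exists Pt : R -> R -> S -> S -> R,
    (forall s t x y, 0 <= s -> s <= t ->
       (@lebesgue_measure R).-integrable `[s, t]
          (fun u => (\sum_(z : S) Pt s u x z * L u z y)%:E) /\
       Pt s t x y = (x == y)%:R +
          Rintegral (@lebesgue_measure R) `[s, t]
            (fun u => \sum_(z : S) Pt s u x z * L u z y)) /\
    (forall (n : nat) (ts : nat -> R) (xs : nat -> S),
       0 <= ts 0%N -> (forall k, (k < n)%N -> ts k <= ts k.+1) ->
       fine (P (\big[setI/setT]_(k < n.+1) [set w | Y (ts k) w = xs k])) =
       fine (P [set w | Y (ts 0%N) w = xs 0%N]) *
       \prod_(k < n) Pt (ts k) (ts k.+1) (xs k) (xs k.+1)).

(* Q^i_t f (x^i) = E(f(X_t) | X^i_t = x^i), the elementary conditional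
   expectation given the event {X^i_t = x^i} (pi is the coordinate map). *)
Definition Qop (R : realType) (d : measure_display) (Om : measurableType d)
  (P : probability Om R) (S Si : Type) (pi : S -> Si) (Y : R -> Om -> S)
  (t : R) (f : S -> R) (xi : Si) : R :=
  fine (\int[P]_(w in [set w | pi (Y t w) = xi]) (f (Y t w))%:E) /
  fine (P [set w | pi (Y t w) = xi]).

Definition Cext (R : realType) (S Si : Type) (pi : S -> Si) (g : Si -> R) : S -> R :=
  fun x => g (pi x).

(* Main.v *)
Require Import Defs.
From HB Require Import structures.
From mathcomp Require Import all_boot all_order all_algebra.
From mathcomp Require Import all_classical all_reals all_analysis.
From mathcomp Require Import measurable_realfun.
From mathcomp Require Import lra ring.
Import Order.TTheory GRing.Theory Num.Theory.
Import numFieldNormedType.Exports.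
Local Open Scope classical_set_scope.
Local Open Scope ring_scope.
Set Implicit Arguments. Unset Strict Implicit. Unset Printing Implicit Defensive.

Lemma ae_nat (R : realType) (Q : nat -> R -> Prop) :
  (forall n, {ae (@lebesgue_measure R), forall t, Q n t}) ->
  {ae (@lebesgue_measure R), forall t, forall n, Q n t}.
Proof.
move=> h; rewrite /almost_everywhere.
apply: (negligibleS _ (negligible_bigcup h)).
move=> t /= Ht.
case: (pselect (exists n, ~ Q n t)) => [[n Hn]|Hno]; first by exists n.
exfalso; apply: Ht => n; apply: contrapT => hn; apply: Hno; by exists n.
Qed.

Lemma key_lemma (R : realType) (s : R) (H : R -> R) :
  (forall t, s <= t -> (@lebesgue_measure R).-integrable `[s, t] (EFin \o H)) ->
  (forall t, s <= t -> \int[(@lebesgue_measure R)]_(u in `[s, t]) H u = 0) ->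
  {ae (@lebesgue_measure R), forall u, s < u -> H u = 0}.
Proof.
move=> hint h0.
have step : forall n : nat, {ae (@lebesgue_measure R), forall u, s < u -> u < s + n.+1%:R -> H u = 0}.
  move=> n; set T := s + n.+1%:R.
  have sT : s <= T by rewrite lerDl.
  pose f := H \_ `[s, T].
  have intf : (@lebesgue_measure R).-integrable setT (EFin \o f).
    by rewrite /f -restrict_EFin; apply/integrable_restrict => //=; rewrite setTI; exact: hint.
  have hy : forall y, (@lebesgue_measure R).-integrable [set` Interval (BLeft s) (BRight y)] (EFin \o f).
    by move=> y; apply: integrableS intf.
  have hae := @FTC1 R f (BLeft s) hy (@integrable_locally R H `[s, T] (measurable_itv _) (hint _ sT)).
  apply: filterS hae; first exact: (ae_filter_ringOfSetsType (@lebesgue_measure R)).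
  move=> u + su uT.
  rewrite /= => /(_ _) []; first by rewrite lte_fin.
  move=> _.
  rewrite {2}/f patchE ifT; last by rewrite inE /= in_itv /= (ltW su) (ltW uT).
  move=> <-.
  rewrite derive1E.
  have -> : 'D_1 (fun x => \int[lebesgue_measure]_(t in [set` Interval (BLeft s) (BRight x)]) f t) u
      = 'D_1 (cst (0:R)) u.
    apply: near_eq_derive; near=> y.
    have sy : s <= y by apply/ltW; near: y; exact: lt_nbhsr.
    have yT : y <= T by apply/ltW; near: y; exact: lt_nbhsl.
    rewrite /cst -(h0 y sy); apply: eq_Rintegral => v; rewrite inE /= in_itv /= => /andP[sv vy].
    by rewrite /f patchE ifT // inE /= in_itv /= sv (le_trans vy yT).
  by rewrite derive_cst.
apply: filterS (ae_nat step); first exact: (ae_filter_ringOfSetsType (@lebesgue_measure R)).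
move=> u Hu su.
have [n un] : exists n : nat, u < s + n.+1%:R.
  exists (Num.trunc (u - s)); rewrite -ltrBlDl.
  have h0' : 0 <= u - s by rewrite subr_ge0 ltW.
  by have /andP[_ ] := truncn_itv h0'.
exact: (Hu n su un).
Unshelve. all: by end_near. Qed.
Lemma pfin (R : realType) (d : measure_display) (Om : measurableType d)
  (P : probability Om R) (A : set Om) : measurable A -> P A \is a fin_num.
Proof.
move=> mA; rewrite ge0_fin_numE ?measure_ge0 //.
exact: (le_lt_trans (probability_le1 P mA) (ltry _)).
Qed.

Lemma pfine_ge0 (R : realType) (d : measure_display) (Om : measurableType d)
  (P : probability Om R) (A : set Om) : 0 <= fine (P A).
Proof. by apply: fine_ge0; exact: measure_ge0. Qed.

Lemma pfine_le1 (R : realType) (d : measure_display) (Om : measurableType d)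
  (P : probability Om R) (A : set Om) : measurable A -> fine (P A) <= 1.
Proof.
move=> mA; rewrite -lee_fin fineK ?pfin //; exact: probability_le1.
Qed.

Lemma pfine_le (R : realType) (d : measure_display) (Om : measurableType d)
  (P : probability Om R) (A B : set Om) : measurable A -> measurable B ->
  A `<=` B -> fine (P A) <= fine (P B).
Proof.
move=> mA mB AB; rewrite -lee_fin !fineK ?pfin //; apply: le_measure => //; by rewrite inE.
Qed.

Lemma padd (R : realType) (d : measure_display) (Om : measurableType d)
  (P : probability Om R) (T : finType) (Y : Om -> T) (E : set Om) :
  measurable E -> (forall z, measurable [set w | Y w = z]) ->
  fine (P E) = \sum_(z : T) fine (P (E `&` [set w | Y w = z])).
Proof.
move=> mE mY.
have gen : forall s : seq T, uniq s ->
    P (E `&` [set w | Y w \in s]) = (\sum_(z <- s) P (E `&` [set w | Y w = z]))%E.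
  elim=> [|a s IH] /=.
    move=> _; rewrite big_nil.
    have -> : E `&` [set w | Y w \in [::]] = set0 by apply/seteqP; split => w //= [].
    exact: measure0.
  move=> /andP[an us]; rewrite big_cons -IH //.
  have -> : E `&` [set w | Y w \in a :: s] =
      (E `&` [set w | Y w = a]) `|` (E `&` [set w | Y w \in s]).
    apply/seteqP; split => w /=.
      by move=> [Ew]; rewrite in_cons => /orP[/eqP ->|ws]; [left|right].
    by move=> [[Ew ->]|[Ew ws]]; split => //; rewrite in_cons ?eqxx // ws orbT.
  rewrite measureU //; first exact: measurableI.
    apply: measurableI => //.
    have -> : [set w | Y w \in s] = \big[setU/set0]_(z <- s) [set w | Y w = z].
      apply/seteqP; split => w /=.
        move=> ws; rewrite -bigcup_seq; exists (Y w) => //.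
      by rewrite -bigcup_seq => -[z /= zs ->].
    by apply: bigsetU_measurable => z _.
  apply/seteqP; split => w //= [[_ ->]] [_]; by move/negP: an.
rewrite sum_fine; last by move=> z _; apply: pfin; exact: measurableI.
rewrite -(gen (index_enum T)) ?index_enum_uniq //.
congr (fine (P _)); apply/seteqP; split => w /=; last by case.
by move=> Ew; split => //; rewrite mem_index_enum.
Qed.
Lemma intR_sum (R : realType) (d : measure_display) (T : measurableType d)
  (mu : {measure set T -> \bar R}) (D : set T) (I : Type) (s : seq I) (Pr : pred I)
  (f : I -> T -> R) : measurable D ->
  (forall i, Pr i -> mu.-integrable D (EFin \o f i)) ->
  mu.-integrable D (EFin \o (fun x => \sum_(i <- s | Pr i) f i x)).
Proof.
move=> mD hf.
have := integrable_sum mD s hf.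
apply: eq_integrable => // x _ /=; by rewrite sumEFin.
Qed.

Lemma intR_Zl (R : realType) (d : measure_display) (T : measurableType d)
  (mu : {measure set T -> \bar R}) (D : set T) (k : R) (f : T -> R) : measurable D ->
  mu.-integrable D (EFin \o f) ->
  mu.-integrable D (EFin \o (fun x => k * f x)).
Proof.
move=> mD hf; have := integrableZl mD k hf.
by apply: eq_integrable => // x _ /=.
Qed.

Lemma Rintegral_sum (R : realType) (d : measure_display) (T : measurableType d)
  (mu : {measure set T -> \bar R}) (D : set T) (I : Type) (s : seq I) (Pr : pred I)
  (f : I -> T -> R) : measurable D ->
  (forall i, Pr i -> mu.-integrable D (EFin \o f i)) ->
  \int[mu]_(x in D) (\sum_(i <- s | Pr i) f i x) = \sum_(i <- s | Pr i) \int[mu]_(x in D) f i x.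
Proof.
move=> mD hf; elim: s => [|a s IH].
  rewrite big_nil; under eq_Rintegral do rewrite big_nil.
  by rewrite /Rintegral integral0.
rewrite big_cons; under eq_Rintegral do rewrite big_cons.
case: ifPn => Pa; last by rewrite IH.
rewrite RintegralD //; first by rewrite IH.
  exact: hf.
exact: intR_sum.
Qed.
Lemma fdd2 (R : realType) (d : measure_display) (Om : measurableType d)
  (P : probability Om R) (S : finType) (Y : R -> Om -> S) (Pt : R -> R -> S -> S -> R) :
  (forall (n : nat) (ts : nat -> R) (xs : nat -> S),
       0 <= ts 0%N -> (forall k, (k < n)%N -> ts k <= ts k.+1) ->
       fine (P (\big[setI/setT]_(k < n.+1) [set w | Y (ts k) w = xs k])) =
       fine (P [set w | Y (ts 0%N) w = xs 0%N]) *
       \prod_(k < n) Pt (ts k) (ts k.+1) (xs k) (xs k.+1)) ->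
  forall s t x y, 0 <= s -> s <= t ->
  fine (P ([set w | Y s w = x] `&` [set w | Y t w = y])) =
  fine (P [set w | Y s w = x]) * Pt s t x y.
Proof.
move=> h s t x y s0 st.
have := h 1%N (fun k => if k == 0%N then s else t) (fun k => if k == 0%N then x else y) s0.
rewrite big_ord_recl big_ord1 /= big_ord1 /=.
by apply; case.
Qed.
Lemma mpi (d : measure_display) (Om : measurableType d)
  (S Si : finType) (pi : S -> Si) (Y : Om -> S) (x : Si) :
  (forall z, measurable [set w | Y w = z]) -> measurable [set w | pi (Y w) = x].
Proof.
move=> hm.
have -> : [set w | pi (Y w) = x] = \big[setU/set0]_(z <- index_enum S | pi z == x) [set w | Y w = z].
  apply/seteqP; split => w /=.
    by move=> <-; rewrite -bigcup_seq_cond; exists (Y w) => //=; rewrite mem_index_enum eqxx.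
  by rewrite -bigcup_seq_cond => -[z /= /andP[_ /eqP <-] ->].
by apply: bigsetU_measurable => z _.
Qed.

Lemma padd_pi (R : realType) (d : measure_display) (Om : measurableType d)
  (P : probability Om R) (S Si : finType) (pi : S -> Si) (Y : Om -> S) (E : set Om) (x : Si) :
  measurable E -> (forall z, measurable [set w | Y w = z]) ->
  fine (P (E `&` [set w | pi (Y w) = x])) =
  \sum_(z | pi z == x) fine (P (E `&` [set w | Y w = z])).
Proof.
move=> mE hm; rewrite (@padd _ _ _ P _ Y); [|exact: measurableI (mpi pi x hm)|by []].
rewrite [RHS]big_mkcond /=; apply: eq_bigr => z _.
case: eqP => [<-|nx].
  congr (fine (P _)); apply/seteqP; split => w /=; first by case=> -[].
  by move=> [Ew <-].
rewrite (_ : _ `&` _ = set0) ?measure0 //.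
by apply/seteqP; split => w //= [[_ piY] Yz]; apply: nx; rewrite -Yz.
Qed.
Lemma GB (R : realType) (S : finType) (M c : S -> S -> R) :
  (forall z z', 0 <= M z z') -> (forall z z', `|c z z'| <= 1) -> (forall z, c z z = 0) ->
  `|\sum_z \sum_z' M z z' * c z z'| <= \sum_z \sum_(z' | z' != z) M z z'.
Proof.
move=> M0 c1 c0.
apply: (le_trans (ler_norm_sum _ _ _)); apply: ler_sum => z _.
apply: (le_trans (ler_norm_sum _ _ _)); rewrite [leRHS]big_mkcond /=; apply: ler_sum => z' _.
case: eqP => [->|_]; first by rewrite c0 mulr0 normr0.
rewrite normrM ger0_norm //; apply: ler_piMr => //.
Qed.
Lemma mfun_fin (d : measure_display) (Om : measurableType d) (R : realType)
  (S : finType) (Y : Om -> S) (f : S -> R) :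
  (forall z, measurable [set w | Y w = z]) ->
  measurable_fun setT (fun w => (f (Y w))%:E).
Proof.
move=> hm _ B mB; rewrite setTI.
have -> : (fun w => (f (Y w))%:E) @^-1` B =
    \big[setU/set0]_(z <- index_enum S | asbool (B (f z)%:E)) [set w | Y w = z].
  apply/seteqP; split => w /=.
    by move=> Bw; rewrite -bigcup_seq_cond; exists (Y w) => //=; rewrite mem_index_enum; apply/asboolP.
  by rewrite -bigcup_seq_cond => -[z /= /andP[_ /asboolP Bz] ->].
by apply: bigsetU_measurable => z _.
Qed.

Lemma int_fin (R : realType) (d : measure_display) (Om : measurableType d)
  (P : probability Om R) (S : finType) (Y : Om -> S) (f : S -> R) (E : set Om) :
  measurable E -> (forall z, measurable [set w | Y w = z]) ->
  fine (\int[P]_(w in E) (f (Y w))%:E) =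
  \sum_(z : S) f z * fine (P (E `&` [set w | Y w = z])).
Proof.
move=> mE hm.
have mf := mfun_fin f hm.
have mYs : forall s : seq S, measurable [set w | Y w \in s].
  move=> s; have -> : [set w | Y w \in s] = \big[setU/set0]_(z <- s) [set w | Y w = z].
    apply/seteqP; split => w /=.
      by move=> ws; rewrite -bigcup_seq; exists (Y w).
    by rewrite -bigcup_seq => -[z /= zs ->].
  by apply: bigsetU_measurable => z _.
have gen : forall s : seq S, uniq s ->
    (\int[P]_(w in E `&` [set w | Y w \in s]) (f (Y w))%:E =
     \sum_(z <- s) (f z)%:E * P (E `&` [set w | Y w = z]))%E.
  elim=> [|a s IH] /=.
    move=> _; rewrite big_nil.
    have -> : E `&` [set w | Y w \in [::]] = set0 by apply/seteqP; split => w //= [].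
    exact: integral_set0.
  move=> /andP[an us]; rewrite big_cons -IH //.
  have -> : E `&` [set w | Y w \in a :: s] =
      (E `&` [set w | Y w = a]) `|` (E `&` [set w | Y w \in s]).
    apply/seteqP; split => w /=.
      by move=> [Ew]; rewrite in_cons => /orP[/eqP ->|ws]; [left|right].
    by move=> [[Ew ->]|[Ew ws]]; split => //; rewrite in_cons ?eqxx // ws orbT.
  rewrite integral_setU; last 4 first.
  - exact: measurableI.
  - exact: measurableI.
  - apply: measurable_funS mf => //; apply: measurableU; exact: measurableI.
  - apply/disj_setPS => w /= [[_ ->]] [_]; by move/negP: an.
  have -> : (\int[P]_(x in E `&` [set w | Y w = a]) (f (Y x))%:E)%E =
        (\int[P]_(x in E `&` [set w | Y w = a]) cst (f a)%:E x)%E.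
    by apply: eq_integral => w; rewrite inE /= => -[_ ->].
  by rewrite integral_cst //; exact: measurableI.
have EE : E `&` [set w | Y w \in index_enum S] = E.
  by apply/seteqP; split => w /=; [case|move=> Ew; split => //; rewrite mem_index_enum].
have := gen _ (index_enum_uniq S); rewrite EE => ->.
rewrite (eq_bigr (fun z => (f z * fine (P (E `&` [set w | Y w = z])))%:E)); last first.
  by move=> z _; rewrite EFinM fineK //; apply: pfin; apply: measurableI.
by rewrite sumEFin.
Qed.
Lemma sum2_ind (R : realType) (S : finType) (M : S -> S -> R) (Pz Qz : pred S) :
  \sum_(z | Pz z) \sum_(z' | Qz z') M z z' = \sum_z \sum_z' M z z' * (Pz z && Qz z')%:R.
Proof.
rewrite big_mkcond /=; apply: eq_bigr => z _.
case: (Pz z) => /=; last by rewrite big1 // => z' _; rewrite mulr0.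
rewrite big_mkcond /=; apply: eq_bigr => z' _.
by case: (Qz z'); rewrite ?mulr1 ?mulr0.
Qed.

Lemma bnd_b2 (R : realType) (b1 b2 : bool) : `|(b1%:R : R) - b2%:R| <= 1.
Proof. by case: b1; case: b2; rewrite /= ?mulr1n ?mulr0n ?subrr ?subr0 ?sub0r ?normrN ?normr1 ?normr0. Qed.

Lemma bnd_b3 (R : realType) (b0 b1 b2 : bool) : `|(b0%:R : R) * (b1%:R - b2%:R)| <= 1.
Proof. by rewrite normrM; case: b0; rewrite /= ?mulr1n ?mulr0n ?normr1 ?mul1r ?normr0 ?mul0r ?bnd_b2. Qed.

Lemma bnd_b1 (R : realType) (b1 : bool) : `|(b1%:R : R)| <= 1.
Proof. by case: b1; rewrite /= ?mulr1n ?mulr0n ?normr1 ?normr0. Qed.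

Lemma sum_bound (R : realType) (I : finType) (a b : I -> R) (D : R) :
  (forall i, `|a i| <= D) -> `|\sum_i a i * b i| <= D * \sum_i `|b i|.
Proof.
move=> ha; apply: (le_trans (ler_norm_sum _ _ _)); rewrite mulr_sumr; apply: ler_sum => i _.
by rewrite normrM; apply: ler_wpM2r.
Qed.
Lemma aeS (R : realType) (Q Q' : R -> Prop) :
  {ae (@lebesgue_measure R), forall u, Q u} -> (forall u, Q u -> Q' u) ->
  {ae (@lebesgue_measure R), forall u, Q' u}.
Proof. move=> h hQ; apply: negligibleS h => u /= nQ' Qu; exact: nQ' (hQ u Qu). Qed.

Lemma aeS2 (R : realType) (Q1 Q2 Q' : R -> Prop) :
  {ae (@lebesgue_measure R), forall u, Q1 u} -> {ae (@lebesgue_measure R), forall u, Q2 u} ->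
  (forall u, Q1 u -> Q2 u -> Q' u) ->
  {ae (@lebesgue_measure R), forall u, Q' u}.
Proof.
move=> [N1 [mN1 N10 h1]] [N2 [mN2 N20 h2]] hQ; exists (N1 `|` N2); split.
- exact: measurableU.
- apply/eqP; rewrite eq_le measure_ge0 andbT.
  apply: (le_trans (measureU2 _ mN1 mN2)).
  change (lebesgue_measure N1 + lebesgue_measure N2 <= 0)%E.
  by rewrite N10 N20 adde0.
- move=> u /= nQ'; case: (pselect (Q1 u)) => q1; last by left; apply: h1.
  case: (pselect (Q2 u)) => q2; last by right; apply: h2.
  by exfalso; apply: nQ'; apply: hQ.
Qed.

Lemma ae_all (R : realType) (Q : R -> Prop) : (forall u, Q u) ->
  {ae (@lebesgue_measure R), forall u, Q u}.
Proof. by move=> h; exists set0; split => // u /=; apply; apply: h. Qed.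

Lemma main_gen (R : realType) (d : measure_display) (Om : measurableType d)
  (P : probability Om R) (S Si : finType) (pi : S -> Si)
  (X : R -> Om -> S) (L : R -> S -> S -> R) (L1 : R -> Si -> Si -> R) :
  (forall t x, 0 <= t -> measurable [set w | X t w = x]) ->
  is_generator L ->
  markov_gen P X L ->
  markov_gen P (fun t w => pi (X t w)) L1 ->
  {ae (@lebesgue_measure R), forall t, 0 <= t ->
        forall (g : Si -> R) (x1 : Si),
          0 < fine (P [set w | pi (X t w) = x1]) ->
          Qop P pi X t (gen_app L t (Cext pi g)) x1 =
          \sum_(y1 : Si) L1 t x1 y1 * g y1}.
Proof.
move=> hm [hLnn hLsum hLint] [Pt [hPt hfdd]] [Pt1 [hPt1 hfdd1]].
pose p t z := fine (P [set w | X t w = z]).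
pose M s t z z' := fine (P ([set w | X s w = z] `&` [set w | X t w = z'])).
pose p1 t x := fine (P [set w | pi (X t w) = x]).
pose A s t x w := fine (P ([set w0 | pi (X s w0) = x] `&` [set w0 | pi (X t w0) = w])).
have mX : forall t z, 0 <= t -> measurable [set w | X t w = z] by [].
have mY : forall t x, 0 <= t -> measurable [set w | pi (X t w) = x].
  by move=> t x t0; apply: mpi => z; exact: hm.
have Mr : forall s t z, 0 <= s -> 0 <= t -> \sum_z' M s t z z' = p s z.
  by move=> s t z s0 t0; rewrite /p (@padd _ _ _ P _ (X t)) //; [exact: hm|move=> ?; exact: hm].
have Ml : forall s t z', 0 <= s -> 0 <= t -> \sum_z M s t z z' = p t z'.
  move=> s t z' s0 t0; rewrite /p (@padd _ _ _ P _ (X s) [set w | X t w = z']); [|exact: hm|move=> ?; exact: hm].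
  by apply: eq_bigr => z _; rewrite /M setIC.
have psum : forall t, 0 <= t -> \sum_z p t z = 1.
  move=> t t0; have := @padd _ _ _ P _ (X t) setT measurableT (fun z => hm t z t0).
  rewrite probability_setT /= => ->; by apply: eq_bigr => z _; rewrite setTI.
have p1E : forall t x, 0 <= t -> p1 t x = \sum_(z | pi z == x) p t z.
  move=> t x t0; have := @padd_pi _ _ _ P _ _ pi (X t) setT x measurableT (fun z => hm t z t0).
  by rewrite setTI /p1 => ->; apply: eq_bigr => z _; rewrite setTI.
have AE : forall s t x w, 0 <= s -> 0 <= t ->
    A s t x w = \sum_(z | pi z == x) \sum_(z' | pi z' == w) M s t z z'.
  move=> s t x w s0 t0; rewrite /A setIC.
  rewrite (@padd_pi _ _ _ P _ _ pi (X s)); [|exact: mY|move=> ?; exact: hm].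
  apply: eq_bigr => z _; rewrite setIC (@padd_pi _ _ _ P _ _ pi (X t)) //; last by move=> ?; exact: hm.
  exact: hm.
have fddX : forall s t z z', 0 <= s -> s <= t -> M s t z z' = p s z * Pt s t z z'.
  by move=> s t z z' s0 st; rewrite /M /p (fdd2 hfdd).
have fddY : forall s t x w, 0 <= s -> s <= t -> A s t x w = p1 s x * Pt1 s t x w.
  by move=> s t x w s0 st; exact: (@fdd2 _ _ _ P _ (fun t w => pi (X t w)) Pt1 hfdd1 s t x w s0 st).
pose F x y s u := p1 s x * \sum_w Pt1 s u x w * L1 u w y.
pose G x y s u := \sum_(z | pi z == x) \sum_(z' | pi z' == y) (p s z * \sum_v Pt s u z v * L u v z').
have intF : forall x y s t, 0 <= s -> s <= t ->
    (@lebesgue_measure R).-integrable `[s, t] (EFin \o F x y s).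
  move=> x y s t s0 st; apply: intR_Zl => //; exact: (hPt1 s t x y s0 st).1.
have intG : forall x y s t, 0 <= s -> s <= t ->
    (@lebesgue_measure R).-integrable `[s, t] (EFin \o G x y s).
  move=> x y s t s0 st; apply: intR_sum => // z _; apply: intR_sum => // z' _.
  apply: intR_Zl => //; exact: (hPt s t z z' s0 st).1.
have eqF : forall x y s t, 0 <= s -> s <= t ->
    A s t x y = p1 s x * (x == y)%:R + \int[lebesgue_measure]_(u in `[s, t]) F x y s u.
  move=> x y s t s0 st; rewrite fddY // (hPt1 s t x y s0 st).2 mulrDr.
  by rewrite /F RintegralZl //; exact: (hPt1 s t x y s0 st).1.
have eqG : forall x y s t, 0 <= s -> s <= t ->
    A s t x y = \sum_(z | pi z == x) \sum_(z' | pi z' == y) (p s z * (z == z')%:R)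
       + \int[lebesgue_measure]_(u in `[s, t]) G x y s u.
  move=> x y s t s0 st; rewrite AE //; last exact: le_trans st.
  rewrite /G Rintegral_sum //; last first.
    move=> z _; apply: intR_sum => // z' _.
    apply: intR_Zl => //; exact: (hPt s t z z' s0 st).1.
  rewrite -big_split /=; apply: eq_bigr => z _.
  rewrite Rintegral_sum //; last first.
    move=> z' _; apply: intR_Zl => //; exact: (hPt s t z z' s0 st).1.
  rewrite -big_split /=; apply: eq_bigr => z' _.
  rewrite fddX // (hPt s t z z' s0 st).2 mulrDr RintegralZl //.
  exact: (hPt s t z z' s0 st).1.
have FG : forall x y s t, 0 <= s -> s <= t ->
    \int[lebesgue_measure]_(u in `[s, t]) F x y s u =
    \int[lebesgue_measure]_(u in `[s, t]) G x y s u.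
  move=> x y s t s0 st.
  have := eqF x y s s s0 (lexx _); have := eqG x y s s s0 (lexx _).
  rewrite set_itv1 !Rintegral_set1 !addr0 => -> hc.
  by have := eqF x y s t s0 st; rewrite eqG // hc => /addrI.
have aes : forall s, 0 <= s ->
    {ae (@lebesgue_measure R), forall u, s < u -> forall x y, F x y s u = G x y s u}.
  move=> s s0.
  have h : forall i : (Si * Si)%type,
      {ae (@lebesgue_measure R), forall u, s < u -> F i.1 i.2 s u - G i.1 i.2 s u = 0}.
    move=> [x y]; apply: key_lemma => t st /=.
      have hB := integrableB _ (intF x y s t s0 st) (intG x y s t s0 st).
      by apply: eq_integrable (hB _) => // u _ /=.
    by rewrite RintegralB ?FG ?subrr //; [exact: intF|exact: intG].
  have hh := filter_forall (ae_filter_ringOfSetsType (@lebesgue_measure R)) h.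
  apply: filterS hh.
  move=> u hu su x y; apply/eqP; rewrite -subr_eq0; apply/eqP; exact: (hu (x, y) su).
have aeQ : {ae (@lebesgue_measure R), forall u : R, forall q : rat, 0 <= (ratr q : R) -> ratr q < u ->
    forall x y, F x y (ratr q) u = G x y (ratr q) u}.
  pose Q n u := match (unpickle n : option rat) with
    | Some q => 0 <= (ratr q : R) -> ratr q < u -> forall x y, F x y (ratr q) u = G x y (ratr q) u
    | None => True end.
  have hQ : forall n, {ae (@lebesgue_measure R), forall u, Q n u}.
    move=> n; rewrite /Q; case: (unpickle n) => [q|]; last first.
      by apply: ae_all.
    have [q0|q0] := boolP (0 <= (ratr q : R)).
      by apply: (@aeS R _ _ (aes _ q0)) => u hu _.
    by apply: ae_all => u h; exfalso; move/negP: q0; apply.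
  apply: (@aeS R _ _ (ae_nat hQ)).
  by move=> u hu q; have := hu (pickle q); rewrite /Q pickleK.
have ae0 : {ae (@lebesgue_measure R), forall u : R, u != 0}.
  exists [set 0]; split; [exact: measurable_set1|exact: lebesgue_measure_set1|].
  by move=> u /= /negP; rewrite negbK => /eqP.
apply: (@aeS2 R _ _ _ ae0 aeQ).
move=> t tn0 hall t0 g x1 hp.
have tpos : 0 < t by rewrite lt_def tn0 t0.
pose D s := \sum_z \sum_(z' | z' != z) M s t z z'.
pose h u := \sum_z \sum_v `|L u v z|.
have intL : forall s v z, 0 <= s -> s <= t ->
    (@lebesgue_measure R).-integrable `[s, t] (EFin \o (fun u => `|L u v z|)).
  move=> s v z s0 st.
  have hi : (@lebesgue_measure R).-integrable `[s, t] (EFin \o (fun u => L u v z)).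
    apply: integrableS (hLint v z t t0) => //.
    by apply: subset_itv; rewrite bnd_simp.
  have := integrable_norm hi; by apply: eq_integrable.
have inth : forall s, 0 <= s -> s <= t -> (@lebesgue_measure R).-integrable `[s, t] (EFin \o h).
  move=> s s0 st; apply: intR_sum => // z _; apply: intR_sum => // v _; exact: intL.
have DB : forall s, 0 <= s -> s <= t -> D s <= \int[lebesgue_measure]_(u in `[s, t]) h u.
  move=> s s0 st; rewrite /h Rintegral_sum //; last first.
    move=> z _; apply: intR_sum => // v _; exact: intL.
  apply: ler_sum => z _.
  have -> : \sum_(z' | z' != z) M s t z z' = p s z - M s t z z.
    by rewrite -(Mr s t z s0 t0) [in RHS](bigD1 z) //= addrC addrK.
  have hint := (hPt s t z z s0 st).1.
  rewrite fddX // (hPt s t z z s0 st).2 eqxx mulrDr mulr1 opprD addNKr.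
  rewrite -RintegralZl //.
  set f := (fun u => p s z * _).
  have intf : (@lebesgue_measure R).-integrable `[s, t] (EFin \o f) by apply: intR_Zl.
  apply: (le_trans _ (le_trans (le_normr_Rintegral _ intf) _)) => //.
    by rewrite -normrN ler_norm.
  apply: le_Rintegral => //.
  - exact: integrable_norm.
  - by apply: intR_sum => // v _; exact: intL.
  move=> u; rewrite /= in_itv /= => /andP[su ut].
  rewrite /f mulr_sumr; apply: (le_trans (ler_norm_sum _ _ _)); apply: ler_sum => v _.
  rewrite mulrA -fddX // normrM ger0_norm ?pfine_ge0 //.
  apply: ler_piMl => //; apply: pfine_le1; apply: measurableI; apply: hm => //.
  exact: le_trans su.
have small : forall e, 0 < e -> exists2 del, 0 < del & forall s, 0 <= s -> s <= t -> t - del < s ->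
    \int[lebesgue_measure]_(u in `[s, t]) h u < e.
  move=> e e0.
  have intf : (@lebesgue_measure R).-integrable setT (EFin \o (h \_ `[0, t])).
    rewrite -restrict_EFin; apply/integrable_restrict => //=; rewrite setTI.
    exact: inth (lexx 0) t0.
  have [del [del0 hdel]] := integral_normr_continuous intf e0.
  exists del => // s s0 st tds.
  have hmu : (lebesgue_measure `[s, t] < del%:E)%E.
    rewrite lebesgue_measure_itv /=; case: ifPn => _; last by rewrite lte_fin.
    by rewrite -EFinD lte_fin ltrBlDl -ltrBlDr.
  have := hdel _ (measurable_itv _) hmu.
  apply: le_lt_trans; rewrite le_eqVlt; apply/orP; left; apply/eqP.
  apply: eq_Rintegral => u; rewrite inE /= in_itv /= => /andP[su ut].
  rewrite patchE ifT; last by rewrite inE /= in_itv /= ut (le_trans s0 su).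
  rewrite ger0_norm //; apply: sumr_ge0 => z _; apply: sumr_ge0 => v _; exact: normr_ge0.
have Dge0 : forall s, 0 <= D s.
  by move=> s; apply: sumr_ge0 => z _; apply: sumr_ge0 => z' _; exact: pfine_ge0.
have T12 : forall x y, p1 t x * L1 t x y =
    \sum_(v | pi v == x) p t v * \sum_(z' | pi z' == y) L t v z'.
  move=> x y.
  pose K v := \sum_(z' | pi z' == y) L t v z'.
  pose C := \sum_w `|L1 t w y| + \sum_v `|K v|.
  have C0 : 0 <= C by apply: addr_ge0; apply: sumr_ge0 => *; exact: normr_ge0.
  have bnd : forall s, 0 <= s -> s < t -> F x y s t = G x y s t ->
      `|p1 t x * L1 t x y - \sum_(v | pi v == x) p t v * K v| <= D s * C.
    move=> s s0 st hFG.
    have st' := ltW st.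
    have eF : F x y s t = \sum_w A s t x w * L1 t w y.
      rewrite /F mulr_sumr; apply: eq_bigr => w _; by rewrite mulrA fddY.
    have eG : G x y s t = \sum_v (\sum_(z | pi z == x) M s t z v) * K v.
      rewrite /K.
      have -> : \sum_v (\sum_(z | pi z == x) M s t z v) * (\sum_(z' | pi z' == y) L t v z') =
          \sum_(z | pi z == x) \sum_(z' | pi z' == y) \sum_v M s t z v * L t v z'.
        under eq_bigr do rewrite mulr_suml.
        rewrite exchange_big /=; apply: eq_bigr => z _.
        under eq_bigr do rewrite mulr_sumr.
        by rewrite exchange_big.
      rewrite /G; apply: eq_bigr => z _; apply: eq_bigr => z' _.
      rewrite mulr_sumr; apply: eq_bigr => v _; by rewrite mulrA fddX.
    have eT1 : p1 t x * L1 t x y = \sum_w ((x == w)%:R * p1 t x) * L1 t w y.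
      rewrite (bigD1 x) //= eqxx mul1r big1 ?addr0 // => w /negbTE.
      by rewrite eq_sym => ->; rewrite mul0r mul0r.
    have eT2 : \sum_(v | pi v == x) p t v * K v = \sum_v ((pi v == x)%:R * p t v) * K v.
      rewrite big_mkcond /=; apply: eq_bigr => v _.
      by case: (pi v == x); rewrite ?mul1r ?mul0r.
    have bA : forall w, `|A s t x w - (x == w)%:R * p1 t x| <= D s.
      move=> w; rewrite AE // ?(le_trans s0 st') // sum2_ind.
      rewrite p1E ?(le_trans s0 st') //.
      have -> : (x == w)%:R * \sum_(z' | pi z' == x) p t z' =
          \sum_z \sum_z' M s t z z' * ((x == w) && (pi z' == x))%:R.
        rewrite -(sum2_ind (M s t) (fun _ => x == w) (fun z' => pi z' == x)).
        case: (x == w) => /=; last by rewrite mul0r big_pred0.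
        rewrite mul1r exchange_big /=; apply: eq_bigr => z' _; by rewrite Ml.
      rewrite -sumrB.
      under eq_bigr do rewrite -sumrB.
      under eq_bigr do under eq_bigr do rewrite -mulrBr.
      apply: GB => [z z'|z z'|z]; first exact: pfine_ge0.
        exact: bnd_b2.
      by case: (pi z =P x) => [->|_] /=; rewrite ?eqxx ?andbT ?andbF ?subrr.
    have bB : forall v, `|\sum_(z | pi z == x) M s t z v - (pi v == x)%:R * p t v| <= D s.
      move=> v; rewrite -(Ml s t v s0 t0) mulr_sumr big_mkcond /= -sumrB.
      have -> : \sum_z ((if pi z == x then M s t z v else 0) - (pi v == x)%:R * M s t z v) =
          \sum_z \sum_z' M s t z z' * ((z' == v)%:R * ((pi z == x)%:R - (pi z' == x)%:R)).
        apply: eq_bigr => z _; rewrite (bigD1 v) //= big1 ?addr0; last first.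
          by move=> z' /negbTE ->; rewrite mul0r mulr0.
        rewrite eqxx mul1r mulrBr; case: (pi z == x); by rewrite /= ?mulr1 ?mulr0 ?sub0r [_%:R * _]mulrC.
      apply: GB => [z z'|z z'|z]; first exact: pfine_ge0.
        exact: bnd_b3.
      by rewrite subrr mulr0.
    rewrite eT1 eT2.
    have -> : \sum_w ((x == w)%:R * p1 t x) * L1 t w y - \sum_v ((pi v == x)%:R * p t v) * K v =
        - (\sum_w (A s t x w - (x == w)%:R * p1 t x) * L1 t w y) +
        (\sum_v (\sum_(z | pi z == x) M s t z v - (pi v == x)%:R * p t v) * K v).
      under [X in _ = - X + _]eq_bigr do rewrite mulrBl.
      under [X in _ = _ + X]eq_bigr do rewrite mulrBl.
      rewrite !sumrB -eF -eG hFG; lra.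
    apply: (le_trans (ler_normD _ _)); rewrite normrN /C mulrDr.
    by apply: lerD; apply: sum_bound.
  apply/eqP; rewrite -subr_eq0 -normr_le0; apply/ler_addgt0Pr => e e0; rewrite add0r.
  have e1 : 0 < e / (C + 1) by apply: divr_gt0 => //; apply: ltr_wpDl.
  have [del del0 hdel] := small _ e1.
  have mt : Num.max 0 (t - del) < t by rewrite gt_max tpos ltrBlDr ltrDl del0.
  have [q] := rat_in_itvoo mt.
  rewrite in_itv /= gt_max => /andP[/andP[q0 qd] qt].
  have q0' := ltW q0.
  apply: (le_trans (bnd _ q0' qt (hall q q0' qt x y))).
  apply: (le_trans (ler_wpM2r C0 (le_trans (DB _ q0' (ltW qt)) (ltW (hdel _ q0' (ltW qt) qd))))).
  rewrite mulrAC ler_pdivrMr ?ltr_wpDl // ler_pM2l // lerDl //.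
rewrite /Qop (@int_fin _ _ _ P _ (X t) (gen_app L t (Cext pi g)) _ (mY t x1 t0) (fun z => hm t z t0)).
have eI : \sum_z gen_app L t (Cext pi g) z *
    fine (P ([set w | pi (X t w) = x1] `&` [set w | X t w = z])) =
    \sum_(z | pi z == x1) gen_app L t (Cext pi g) z * p t z.
  rewrite [RHS]big_mkcond /=; apply: eq_bigr => z _.
  case: eqP => [<-|nx].
    congr (_ * fine (P _)); apply/seteqP; split => w /=; first by case.
    by move=> Xw; split => //; rewrite Xw.
  rewrite (_ : _ `&` _ = set0) ?measure0 ?mulr0 //.
  by apply/seteqP; split => w //= [piw Xw]; apply: nx; rewrite -Xw.
rewrite eI.
have key : \sum_(z | pi z == x1) gen_app L t (Cext pi g) z * p t z =
    p1 t x1 * \sum_y1 L1 t x1 y1 * g y1.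
  rewrite mulr_sumr.
  under [RHS]eq_bigr do rewrite mulrA T12 mulr_suml.
  rewrite [RHS]exchange_big /=; apply: eq_bigr => v _.
  rewrite /gen_app /Cext (partition_big (fun z' => pi z') xpredT) //= mulr_suml.
  apply: eq_bigr => y _.
  have -> : \sum_(z' | pi z' == y) L t v z' * g (pi z') = (\sum_(z' | pi z' == y) L t v z') * g y.
    rewrite mulr_suml; apply: eq_bigr => z' /eqP ->; done.
  ring.
rewrite key mulrC mulKf //; exact: lt0r_neq0.
Qed.

Theorem theorem1p3 (R : realType) (d : measure_display) (Om : measurableType d)
  (P : probability Om R) (X1 X2 : finType)
  (X : R -> Om -> (X1 * X2)%type) (L : R -> (X1 * X2)%type -> (X1 * X2)%type -> R) :
  (forall t x, 0 <= t -> measurable [set w | X t w = x]) ->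
  cadlag X ->
  is_generator L ->
  markov_gen P X L ->
  (forall L1 : R -> X1 -> X1 -> R,
     is_generator L1 ->
     markov_gen P (fun t w => (X t w).1) L1 ->
     {ae (@lebesgue_measure R), forall t, 0 <= t ->
        forall (g : X1 -> R) (x1 : X1),
          0 < fine (P [set w | (X t w).1 = x1]) ->
          Qop P fst X t (gen_app L t (Cext fst g)) x1 =
          \sum_(y1 : X1) L1 t x1 y1 * g y1}) /\
  (forall L2 : R -> X2 -> X2 -> R,
     is_generator L2 ->
     markov_gen P (fun t w => (X t w).2) L2 ->
     {ae (@lebesgue_measure R), forall t, 0 <= t ->
        forall (g : X2 -> R) (x2 : X2),
          0 < fine (P [set w | (X t w).2 = x2]) ->
          Qop P snd X t (gen_app L t (Cext snd g)) x2 =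
          \sum_(y2 : X2) L2 t x2 y2 * g y2}).
Proof.
move=> hm hc hL hX; split => [L1 _ hY | L2 _ hY].
- exact: (@main_gen R d Om P _ _ fst X L L1 hm hL hX hY).
- exact: (@main_gen R d Om P _ _ snd X L L2 hm hL hX hY).
Qed.
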